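(* Let $n,t,m,t'$ be positive integers with $n>m$, $t'\ge \frac{t\log(n-m)}{\log n}$ and $m\ge t'+2$. Then there exist a map $\mathcal{E}:\mathcal{S}_n\to\mathcal{S}_{n+t'}$ and a decoding map $\mathcal{D}$ such that for every $\sigma\in\mathcal{S}_n$ and every sequence $\pi_e$ obtained from $\pi=\mathcal{E}(\sigma)$ by at most $t$ stuck-at errors with threshold $m$ (as defined in the context), we have $\mathcal{D}(\pi_e)=\sigma$.
   Context: $\mathcal{S}_N$ denotes the set of permutations $\pi=(\pi(1),\ldots,\pi(N))$ of $[N]=\{1,\ldots,N\}$. Stuck-at errors with threshold $m$: a sequence $\pi_e\in[N]^N$ is obtained from $\pi\in\mathcal{S}_N$ by at most $t$ stuck-at errors if there is a set $I\subseteq[N]$ with $|I|\le t$ and $\pi(i)>m$ for all $i\in I$, such that $\pi_e(i)=\pi(i)-1$ for $i\in I$ and $\pi_e(i)=\pi(i)$ for $i\in[N]\setminus I$. Logarithms are to a common base (e.g. base 2). *)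

(* Defs.v *)
From mathcomp Require Import all_boot all_order all_fingroup.
From Stdlib Require Import Rdefinitions Raxioms RIneq Rpower.
Set Implicit Arguments. Unset Strict Implicit. Unset Printing Implicit Defensive.

(* A permutation pi of [N] = {1..N} is represented by p : 'S_N (a permutation of
   'I_N = {0..N-1}); its value at position i is  pval p i := (p i).+1 in {1..N}.
   Positions are indexed by 'I_N. *)
Definition pval (N : nat) (p : 'S_N) (i : 'I_N) : nat := (p i).+1.

Definition stuck_at (N m t : nat) (p : 'S_N) (pe : {ffun 'I_N -> nat}) : Prop :=
  exists I : {set 'I_N},
    [/\ #|I| <= t,
        (forall i, i \in I -> m < pval p i) &
        (forall i, pe i = if i \in I then (pval p i).-1 else pval p i)].

(* The hypothesis t' >= t log(n-m) / log n, with natural logarithms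
   (the base is irrelevant). *)
Definition log_cond (n t m t' : nat) : Prop :=
  Rle (Rdiv (Rmult (INR t) (ln (INR (n - m)))) (ln (INR n))) (INR t').

(* Main.v *)
Require Import Defs.
From Stdlib Require Import Rdefinitions Raxioms RIneq Rpower Rfunctions.
From mathcomp Require Import all_boot all_order all_fingroup.
From mathcomp Require Import zify.
Set Implicit Arguments. Unset Strict Implicit. Unset Printing Implicit Defensive.


Fixpoint gen (L t : nat) : seq (seq bool) :=
  match L with
  | 0 => [:: [::]]
  | L1.+1 =>
    match L1 with
    | 0 => [:: [:: false]] ++ (if t is _.+1 then [:: [:: true]] else [::])
    | L0.+1 => map (cons false) (gen L1 t) ++
               (if t is t0.+1 then map (fun s => true :: false :: s) (gen L0 t0) else [::])
    end
  end.

Definition f L t := size (gen L t).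

Lemma f0 t : f 0 t = 1. Proof. by []. Qed.
Lemma f1 t : f 1 t = (if t is _.+1 then 2 else 1). Proof. by case: t. Qed.
Lemma fSS L t : f L.+2 t = f L.+1 t + (if t is t0.+1 then f L t0 else 0).
Proof. by rewrite /f /= size_cat size_map; case: t => //= t; rewrite size_map. Qed.

Fixpoint nonadj (s : seq bool) : bool :=
  if s is b :: s' then (if s' is b' :: _ then ~~ (b && b') else true) && nonadj s' else true.

Lemma gen_complete L : forall t s, size s = L -> count id s <= t -> nonadj s -> s \in gen L t.
Proof.
elim: L {-2}L (leqnn L) => [|K IH] L hL t s.
  by move: hL; rewrite leqn0 => /eqP ->; case: s.
case: L hL => [|[|L]] hL.
- by case: s.
- case: s => [|b [|]] //= _; case: b; case: t => //= t; rewrite ?in_cons ?eqxx //.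
- case: s => [|b [|b' s]] //= [hs]; case: b => /=.
  + case: t => [|t] //; rewrite add1n ltnS => hc /andP [hb hn].
    case: b' hb hc hn => //= _ hc hn.
    rewrite mem_cat; apply/orP; right; apply/mapP; exists s => //.
    apply: IH => //; first by rewrite -ltnS (leq_trans _ hL).
    by case: s hs hn {hc} => [|? ?] //= _ /andP [].
  + rewrite add0n => hc hn.
    rewrite mem_cat; apply/orP; left; apply/mapP; exists (b' :: s) => //.
    by apply: (IH L.+1) => //=; rewrite hs.
Qed.

Lemma f_mono L t : f L t <= f L.+1 t.
Proof.
case: L => [|L]; first by rewrite f0 f1; case: t.
by rewrite fSS leq_addr.
Qed.

Lemma f_mono_le L L' t : L <= L' -> f L t <= f L' t.
Proof.
move=> h; rewrite -(subnKC h); elim: (L' - L) => [|k IH]; first by rewrite addn0.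
by rewrite addnS (leq_trans IH (f_mono _ _)).
Qed.

Lemma expm m n e : m <= n -> m ^ e <= n ^ e.
Proof. by case: e => [|e] h //; rewrite leq_exp2r. Qed.

Lemma ind2 (P : nat -> Prop) : P 0 -> P 1 -> (forall L, P L -> P L.+1 -> P L.+2) -> forall L, P L.
Proof.
move=> h0 h1 hS L; suff: P L /\ P L.+1 by case.
by elim: L => [|L [IH1 IH2]]; split => //; apply: hS.
Qed.

Lemma f_t0 L : f L 0 = 1.
Proof. by elim/ind2: L => // L h1 h2; rewrite fSS h2. Qed.

Lemma f_t1 L : f L 1 = L.+1.
Proof. by elim/ind2: L => // L h1 h2; rewrite fSS h2 f_t0 addn1. Qed.

Lemma f_pow2 L : forall t, f L t <= 2 ^ L.
Proof.
elim/ind2: L => [t|t|L h1 h2 t]; first by [].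
  by rewrite f1; case: t.
have p0 : 0 < 2 ^ L by rewrite expn_gt0.
rewrite fSS !expnS; case: t => [|t]; first by rewrite addn0 f_t0; lia.
have := h2 t.+1; have := h1 t; rewrite expnS; lia.
Qed.

Lemma f_powL L : forall t, f L t <= L.+1 ^ t.
Proof.
elim/ind2: L => [t|t|L h1 h2 t]; first by rewrite f0 exp1n.
  by rewrite f1; case: t => // t; rewrite expnS leq_pmulr // expn_gt0.
rewrite fSS; case: t => [|t]; first by rewrite addn0 f_t0 expn0.
have A := h2 t.+1; have B := h1 t.
have C : L.+1 ^ t <= L.+3 ^ t by apply: (@expm L.+1 L.+3 t); lia.
have D : L.+2 * L.+2 ^ t <= L.+2 * L.+3 ^ t by apply: leq_mul => //; apply: (@expm L.+2 L.+3 t); lia.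
move: A; rewrite !expnS; lia.
Qed.

Fixpoint fib (k : nat) : nat :=
  match k with 0 => 0 | k1.+1 => match k1 with 0 => 1 | k0.+1 => fib k1 + fib k0 end end.

Lemma fib_pos k : 0 < fib k.+1.
Proof. by elim/ind2: k => // k h1 h2; rewrite /= in h2 *; lia. Qed.

Lemma f_fib L : forall t, f L t <= fib L.+2.
Proof.
elim/ind2: L => [t|t|L h1 h2 t]; first by [].
  by rewrite f1; case: t.
rewrite fSS; case: t => [|t]; first by rewrite addn0 f_t0; apply: fib_pos.
have : fib L.+4 = fib L.+3 + fib L.+2 by []. have := h2 t.+1; have := h1 t; lia.
Qed.

Lemma fib_bound t : fib t.+4 <= 2 ^ t.+1 + 1.
Proof.
elim/ind2: t => // t h1 h2.
have : fib t.+2.+4 = fib t.+1.+4 + fib t.+4 by [].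
move: h1 h2; rewrite !expnS; lia.
Qed.

Lemma powS1 x k : x ^ k.+1 + 1 <= x.+1 ^ k.+1.
Proof.
elim: k => [|k IH]; first by rewrite !expn1 addn1.
have h : x ^ k.+1 <= x.+1 ^ k.+1 by apply: expm.
move: IH h; rewrite (expnS x k.+1) (expnS x.+1 k.+1); nia.
Qed.

Lemma fG b : forall s, f (b + s).+2 s.+1 <= b.+2 ^ s.+1 + 1.
Proof.
elim: b => [|b IH] s.
  by rewrite add0n (leq_trans (f_fib _ _)) // fib_bound.
case: s => [|s]; first by rewrite f_t1 expn1; lia.
have -> : (b.+1 + s.+1).+2 = (b + s.+1).+1.+2 by rewrite addSn.
rewrite fSS.
have E1 := IH s.+1.
have -> : (b + s.+1).+1 = (b + s).+2 by rewrite addnS.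
have E2 := IH s.
have E3 := powS1 b.+2 s.
have E4 : b.+3 * (b.+2 ^ s.+1 + 1) <= b.+3 * b.+3 ^ s.+1 by rewrite leq_mul2l E3 orbT.
move: E1 E2 E4; rewrite (expnS b.+3 s.+1) (expnS b.+2 s.+1) addnS; lia.
Qed.

Lemma f_final a t t' n : 0 < a -> 0 < t -> 0 < t' -> a + t' + 2 <= n ->
  a ^ t <= n ^ t' -> f (a + t') t <= n.+1 ^ t'.
Proof.
move=> ha ht ht' hn hp.
case: (leqP t t') => htt.
  apply: (leq_trans (f_powL _ _)).
  apply: (@leq_trans ((a + t').+1 ^ t')); first by apply: leq_pexp2l.
  apply: expm; lia.
case: a ha hn hp => [|[|b]] // _ hn hp.
  apply: (leq_trans (f_pow2 _ _)).
  apply: (@leq_trans (2 ^ (2 * t'))); first by apply: leq_pexp2l => //; lia.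
  rewrite expnM; apply: expm; lia.
case: t ht htt hp => [|s] // _ htt hp.
apply: (@leq_trans (f (b + s).+2 s.+1)); first by apply: f_mono_le; lia.
apply: (leq_trans (fG _ _)).
case: t' ht' htt hn hp => [|k] // _ htt hn hp.
apply: leq_trans (powS1 n k); by rewrite leq_add2r.
Qed.

Definition near1 N (q : 'S_N) :=
  forall v : 'I_N, nat_of_ord (q v) <= (nat_of_ord v).+1 /\ nat_of_ord v <= (nat_of_ord (q v)).+1.

Lemma det_key N (qa qb : 'S_N) (v : 'I_N) : near1 qb ->
  (forall u : 'I_N, nat_of_ord u < nat_of_ord v -> qa u = qb u) ->
  (nat_of_ord (qa v)).+1 = nat_of_ord v -> nat_of_ord (qb v) = nat_of_ord v -> False.
Proof.
move=> nb IH h1 h2.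
set w := qa v; set u := (qb^-1)%g w.
have qu : qb u = w by rewrite /u permKV.
have [_ hu] := nb u.
have uv : nat_of_ord u < nat_of_ord v.
  rewrite ltn_neqAle; apply/andP; split; last first. move: hu; rewrite qu /w; lia.
  apply/negP => /eqP /ord_inj E; move: qu; rewrite E => qv.
  by move: h2; rewrite qv /w; lia.
have := IH u uv; rewrite qu /w => /perm_inj E.
by move: uv; rewrite E ltnn.
Qed.

Lemma det N (q1 q2 : 'S_N) : near1 q1 -> near1 q2 ->
  (forall v, (nat_of_ord (q1 v) == (nat_of_ord v).+1) = (nat_of_ord (q2 v) == (nat_of_ord v).+1)) -> q1 = q2.
Proof.
move=> n1 n2 hb; apply/permP.
suff H : forall k (v : 'I_N), nat_of_ord v < k -> q1 v = q2 v by move=> v; apply: (H (nat_of_ord v).+1).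
elim=> [|k IH] v //; rewrite ltnS leq_eqVlt => /orP [/eqP hv|]; last by apply: IH.
have IH' : forall u : 'I_N, nat_of_ord u < nat_of_ord v -> q1 u = q2 u by move=> u; rewrite hv; apply: IH.
have IH'' : forall u : 'I_N, nat_of_ord u < nat_of_ord v -> q2 u = q1 u by move=> u /IH' ->.
have [a1 b1] := n1 v; have [a2 b2] := n2 v; have hbv := hb v.
apply: ord_inj.
case E1: (nat_of_ord (q1 v) == (nat_of_ord v).+1); move: hbv; rewrite E1.
  by move/esym/eqP; move/eqP: E1 => ->.
case E2: (nat_of_ord (q2 v) == (nat_of_ord v).+1) => // _.
move/eqP: E1 => E1; move/eqP: E2 => E2.
case: (ltngtP (nat_of_ord (q1 v)) (nat_of_ord (q2 v))) => // h.
- exfalso; apply: (det_key (qa := q1) (qb := q2) n2 IH'); lia.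
- exfalso; apply: (det_key (qa := q2) (qb := q1) n1 IH''); lia.
Qed.

Lemma nonadj_q N (q : 'S_N) : near1 q -> forall k (v w : 'I_N),
  nat_of_ord v = k -> nat_of_ord w = k.+1 -> nat_of_ord (q v) = k.+1 -> nat_of_ord (q w) = k.
Proof.
move=> nq; elim=> [|k IH] v w hv hw hq.
all: set u := (q^-1)%g v; have qu : q u = v by rewrite /u permKV.
all: have [a1 a2] := nq u; rewrite qu in a1 a2.
- have : nat_of_ord u = 1 \/ nat_of_ord u = 0 by lia.
  case=> hu.
    have -> : w = u by apply: ord_inj; rewrite hu hw.
    by rewrite qu hv.
  have uv : u = v by apply: ord_inj; rewrite hu hv.
  by move: hq; rewrite -uv qu hv.
- have : nat_of_ord u = k.+2 \/ nat_of_ord u = k.+1 \/ nat_of_ord u = k by lia.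
  case=> [hu|[hu|hu]].
  + have -> : w = u by apply: ord_inj; rewrite hu hw.
    by rewrite qu hv.
  + have uv : u = v by apply: ord_inj; rewrite hu hv.
    by move: hq; rewrite -uv qu hv; lia.
  + have := IH u v hu hv; rewrite qu hv => /(_ erefl); rewrite hq; lia.
Qed.

Definition upq N (q : 'S_N) (k : nat) : bool :=
  [exists u : 'I_N, (nat_of_ord u == k) && (nat_of_ord (q u) == k.+1)].

Lemma upqE N (q : 'S_N) (v : 'I_N) : upq q (nat_of_ord v) = (nat_of_ord (q v) == (nat_of_ord v).+1).
Proof.
apply/existsP/idP => [[u /andP [/eqP /ord_inj -> //]]|h].
by exists v; rewrite eqxx h.
Qed.

Definition W N (q : 'S_N) := [seq upq q k | k <- iota 0 N].

Lemma W_inj N (q1 q2 : 'S_N) : near1 q1 -> near1 q2 -> W q1 = W q2 -> q1 = q2.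
Proof.
move=> n1 n2 hW; apply: det => // v.
have hv : nat_of_ord v < size (iota 0 N) by rewrite size_iota.
have := congr1 (fun s => nth false s (nat_of_ord v)) hW => /=.
by rewrite /W !(nth_map 0) // nth_iota ?add0n -?size_iota // !upqE.
Qed.

Lemma count_W N (q : 'S_N) :
  count id (W q) = #|[set v : 'I_N | nat_of_ord (q v) == (nat_of_ord v).+1]|.
Proof.
rewrite /W count_map -val_enum_ord count_map.
rewrite (@eq_count _ _ (fun v : 'I_N => nat_of_ord (q v) == (nat_of_ord v).+1)); last first.
  by move=> v /=; rewrite upqE.
rewrite enumT cardE /enum_mem size_filter; apply: eq_count => v /=; by rewrite inE.
Qed.

Lemma nonadj_map (g : nat -> bool) : (forall j, ~~ (g j && g j.+1)) ->
  forall l k, nonadj (map g (iota k l)).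
Proof.
move=> hg; elim=> [|l IH] k //=.
rewrite IH andbT; case: l {IH} => //= l; exact: hg.
Qed.

Lemma W_shape N (q : 'S_N) c L t : near1 q ->
  (forall v : 'I_N, nat_of_ord (q v) == (nat_of_ord v).+1 -> c <= v) ->
  c + L + 1 = N -> count id (W q) <= t ->
  W q \in [seq nseq c false ++ s ++ [:: false] | s <- gen L t].
Proof.
move=> nq hc hN hcnt.
have E : W q = nseq c false ++ map (upq q) (iota c L) ++ [:: false].
  have hI : iota 0 N = iota 0 c ++ iota c L ++ [:: c + L].
    by rewrite -hN iotaD iotaD add0n -catA.
  rewrite /W hI map_cat map_cat /=.
  congr (_ ++ _ ++ _).
    have : all (fun k => ~~ upq q k) (iota 0 c).
      apply/allP => k; rewrite mem_iota add0n => /andP [_ hk].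
      apply/negP => /existsP [u /andP [/eqP hu hq]].
      by have := hc u; rewrite hu => /(_ hq); lia.
    rewrite -[X in nseq X false](size_iota 0 c).
    elim: (iota 0 c) => //= a s IH /andP [/negbTE -> /IH ->] //.
  congr (_ :: _); apply/negbTE/negP => /existsP [u /andP [/eqP hu /eqP hq]].
  have := ltn_ord (q u); rewrite hq; lia.
rewrite E; apply/mapP; exists (map (upq q) (iota c L)) => //.
apply: gen_complete; first by rewrite size_map size_iota.
  apply: leq_trans hcnt; rewrite E !count_cat; lia.
apply: nonadj_map => j; apply/negP => /andP [/existsP [v /andP [/eqP hv /eqP hqv]]].
move=> /existsP [w /andP [/eqP hw /eqP hqw]].
have := nonadj_q nq hv hw hqv; rewrite hqw; lia.
Qed.

Definition errv N (p : 'S_N) (I : {set 'I_N}) (i : 'I_N) : nat :=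
  if i \in I then (Defs.pval p i).-1 else Defs.pval p i.

Definition okI N m t (p : 'S_N) (I : {set 'I_N}) : bool :=
  (#|I| <= t) && [forall i in I, m < Defs.pval p i].

Definition confb N m t (p p' : 'S_N) : bool :=
  [exists I : {set 'I_N}, exists I' : {set 'I_N},
    [&& okI m t p I, okI m t p' I' & [forall i, errv p I i == errv p' I' i]]].

Lemma stuck_confb N m t (p p' : 'S_N) pe :
  stuck_at m t p pe -> stuck_at m t p' pe -> confb m t p p'.
Proof.
move=> [I [hI hm he]] [I' [hI' hm' he']].
apply/existsP; exists I; apply/existsP; exists I'.
rewrite /okI hI hI' /=; apply/and3P; split.
- by apply/forall_inP.
- by apply/forall_inP.
- by apply/forallP => i; rewrite /errv -he -he'.
Qed.

Lemma confb_sym N m t (p p' : 'S_N) : confb m t p p' -> confb m t p' p.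
Proof.
move=> /existsP [I /existsP [I' /and3P [h1 h2 /forallP h3]]].
apply/existsP; exists I'; apply/existsP; exists I; rewrite h1 h2 /=.
by apply/forallP => i; rewrite eq_sym h3.
Qed.

Lemma confb_refl N m t (p : 'S_N) : confb m t p p.
Proof.
apply/existsP; exists set0; apply/existsP; exists set0.
rewrite /okI cards0 /=; apply/and3P; split => //.
- by apply/forall_inP => i; rewrite inE.
- by apply/forall_inP => i; rewrite inE.
- by apply/forallP.
Qed.

Lemma conf_near N m t (p p' : 'S_N) : confb m t p p' ->
  let q := (p^-1 * p')%g in
  [/\ near1 q,
      (forall v : 'I_N, nat_of_ord (q v) == (nat_of_ord v).+1 -> m <= (nat_of_ord v).+1) &
      #|[set v : 'I_N | nat_of_ord (q v) == (nat_of_ord v).+1]| <= t].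
Proof.
move=> /existsP [I /existsP [I' /and3P [_ /andP [hI' /forall_inP hm'] /forallP he]]] q.
have loc : forall v : 'I_N,
  [/\ nat_of_ord (q v) <= (nat_of_ord v).+1, nat_of_ord v <= (nat_of_ord (q v)).+1 &
      (nat_of_ord (q v) == (nat_of_ord v).+1) -> ((p^-1)%g v \in I') /\ m <= (nat_of_ord v).+1].
  move=> v; set i := (p^-1)%g v.
  have hp : p i = v by rewrite /i permKV.
  have hq : q v = p' i by rewrite /q permM.
  have := he i; have := hm' i; rewrite /errv /Defs.pval hp hq => hmi /eqP E.
  have hyp : nat_of_ord (p' i) = (nat_of_ord v).+1 -> i \in I'.
    by move=> hh; move: E; case: (i \in I); case: (i \in I'); lia.
  split.
  - by move: E; case: (i \in I); case: (i \in I'); lia.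
  - by move: E; case: (i \in I); case: (i \in I'); lia.
  - move=> /eqP hh; have hi := hyp hh; split => //; have := hmi hi; lia.
split.
- by move=> v; have [] := loc v.
- by move=> v /eqP h; have [_ _ /(_ (introT eqP h)) []] := loc v.
- apply: leq_trans hI'.
  have -> : #|I'| = #|[set p x | x in I']| by rewrite card_imset //; apply: perm_inj.
  apply: subset_leq_card; apply/subsetP => v; rewrite inE => hv.
  have [_ _ /(_ hv) [hi _]] := loc v.
  by rewrite -(permKV p v); apply: imset_f.
Qed.

Lemma greedy (T : finType) (r : rel T) K :
  (forall x, r x x) -> (forall x y, r x y -> r y x) ->
  (forall x, #|[set y | r x y]| <= K) ->
  exists C : {set T}, (forall x y, x \in C -> y \in C -> r x y -> x = y) /\ #|T| <= #|C| * K.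
Proof.
move=> hrefl hsym hK.
suff H : forall n (A : {set T}), #|A| <= n -> exists C : {set T},
    [/\ C \subset A, (forall x y, x \in C -> y \in C -> r x y -> x = y) & #|A| <= #|C| * K].
  have [C [_ h1 h2]] := H _ [set: T] (leqnn _).
  by exists C; split => //; rewrite -cardsT.
elim=> [|n IH] A hA.
  exists set0; split; first by rewrite sub0set.
    by move=> x y; rewrite inE.
  by move: hA; rewrite leqn0 => /eqP ->.
case: (set_0Vmem A) => [->|[x xA]].
  exists set0; rewrite sub0set cards0; split => //.
  by move=> x y; rewrite inE.
set A' := A :\: [set y | r x y].
have xA' : x \notin A' by rewrite !inE hrefl.
have hA' : #|A'| <= n.
  rewrite -ltnS (leq_trans _ hA) //; apply: proper_card.
  apply/properP; split; first by apply: subsetDl.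
  by exists x.
have [C' [s1 s2 s3]] := IH A' hA'.
exists (x |: C'); split.
- apply/subsetP => y; rewrite !inE => /orP [/eqP ->//|yC].
  by have := subsetP s1 y yC; rewrite !inE => /andP [].
- have nx : forall y, y \in C' -> ~~ r x y.
    by move=> y yC; have := subsetP s1 y yC; rewrite !inE => /andP [].
  move=> y z; rewrite !inE => /orP [/eqP ->|yC] /orP [/eqP ->|zC] //.
  + by move=> hr; have := nx z zC; rewrite hr.
  + by move=> /hsym hr; have := nx y yC; rewrite hr.
  + exact: s2.
- rewrite cardsU1 (negbTE (contra (subsetP s1 x) xA')) mulSn.
  rewrite -(cardsID [set y | r x y] A) leq_add //.
  by apply: leq_trans (hK x); apply: subset_leq_card; apply: subsetIr.
Qed.

Lemma nbr_bound N m t (p : 'S_N) : 0 < m -> m <= N ->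
  #|[set p' | confb m t p p']| <= f (N - m) t.
Proof.
move=> hm hmN.
set S := [set p' | confb m t p p'].
set phi := fun p' : 'S_N => W ((p^-1 * p')%g).
set G := [seq nseq m.-1 false ++ s ++ [:: false] | s <- gen (N - m) t].
rewrite /f -(size_map (fun s => nseq m.-1 false ++ s ++ [:: false])) -/G.
rewrite cardE -(size_map phi).
apply: uniq_leq_size.
  rewrite map_inj_in_uniq ?enum_uniq // => x y; rewrite !mem_enum !inE => hx hy hxy.
  have [n1 _ _] := conf_near hx; have [n2 _ _] := conf_near hy.
  by have := W_inj n1 n2 hxy => /mulgI.
move=> s /mapP [x]; rewrite mem_enum inE => hx ->.
have [n1 h2 h3] := conf_near hx.
apply: W_shape => //.
- by move=> v /h2; lia.
- lia.
- by rewrite count_W.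
Qed.

Lemma expn_pow x k : expn x k = Nat.pow x k.
Proof. by elim: k => // k IH; rewrite expnS IH. Qed.

Lemma log_pow n t m t' : m < n -> 1 < n -> log_cond n t m t' -> (n - m) ^ t <= n ^ t'.
Proof.
move=> hmn hn; rewrite /log_cond => H.
have hn' : Rlt (INR 1) (INR n) by apply: lt_INR; apply/ltP.
have ha : Rlt (INR 0) (INR (n - m)) by apply: lt_INR; apply/ltP; rewrite subn_gt0.
have lnp : Rlt (ln (INR 1)) (ln (INR n)).
  by apply: ln_increasing => //; apply: Rlt_0_1.
rewrite /= ln_1 in lnp hn' ha.
have H2 : Rle (Rmult (INR t) (ln (INR (n - m)))) (Rmult (INR t') (ln (INR n))).
  have := Rmult_le_compat_r _ _ _ (Rlt_le _ _ lnp) H.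
  rewrite /Rdiv Rmult_assoc Rinv_l; last by apply: Rgt_not_eq.
  by rewrite Rmult_1_r.
rewrite -ln_pow // -ln_pow in H2; last by apply: Rlt_trans hn'; apply: Rlt_0_1.
have H3 : Rle (pow (INR (n - m)) t) (pow (INR n) t').
  case: (Rle_or_lt (pow (INR (n - m)) t) (pow (INR n) t')) => // hlt.
  exfalso; apply: (Rlt_not_le _ _ _ H2); apply: ln_increasing => //.
  apply: pow_lt => //; apply: Rlt_trans hn'; apply: Rlt_0_1.
rewrite -!pow_INR in H3.
by rewrite !expn_pow; apply/leP; apply: INR_le.
Qed.

Lemma fact_bound n k : n`! * n.+1 ^ k <= (n + k)`!.
Proof.
elim: k => [|k IH]; first by rewrite expn0 muln1 addn0.
rewrite addnS factS expnS mulnCA.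
apply: leq_mul => //; lia.
Qed.

Theorem theorem1 (n t m t' : nat) :
  0 < n -> 0 < t -> 0 < m -> 0 < t' ->
  m < n -> log_cond n t m t' -> t'.+2 <= m ->
  exists (E : 'S_n -> 'S_(n + t')) (D : {ffun 'I_(n + t') -> nat} -> 'S_n),
    forall (s : 'S_n) (pe : {ffun 'I_(n + t') -> nat}),
      stuck_at m t (E s) pe -> D pe = s.
Proof.
move=> hn ht hm ht' hmn hlog hmt.
have hn1 : 1 < n by lia.
have hp := log_pow hmn hn1 hlog.
have hF : f (n + t' - m) t <= n.+1 ^ t'.
  have -> : n + t' - m = (n - m) + t' by lia.
  apply: f_final => //; [by rewrite subn_gt0 | lia].
have hmN : m <= n + t' by lia.
have [C [hC hcard]] := @greedy ('S_(n + t')) (confb m t) (f (n + t' - m) t)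
  (@confb_refl _ m t) (@confb_sym _ m t) (fun p => @nbr_bound _ m t p hm hmN).
have hCn : n`! <= #|C|.
  have h1 := fact_bound n t'.
  rewrite card_Sn in hcard.
  have h2 : #|C| * f (n + t' - m) t <= #|C| * n.+1 ^ t' by rewrite leq_mul2l hF orbT.
  rewrite -(@leq_pmul2r (n.+1 ^ t')) ?expn_gt0 //.
  by apply: leq_trans h1 (leq_trans hcard h2).
have hS : #|'S_n| <= #|C| by rewrite card_Sn.
pose E := fun s : 'S_n => @enum_val _ (mem C) (widen_ord hS (enum_rank s)).
have EC : forall s, E s \in C by move=> s; apply: enum_valP.
have Einj : injective E.
  move=> s1 s2 /enum_val_inj /(congr1 val) /= /val_inj; exact: enum_rank_inj.
pose D := fun pe : {ffun 'I_(n + t') -> nat} => odflt 1%g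
  [pick s : 'S_n | [exists I, okI m t (E s) I && [forall i, pe i == errv (E s) I i]]].
exists E, D => s pe hst.
rewrite /D; case: pickP => [s' hs'|hnone] /=.
  apply: Einj; apply: hC; [exact: EC | exact: EC |].
  apply: stuck_confb _ hst.
  move: hs' => /existsP [I /andP [/andP [hI /forall_inP hI2] /forallP he]].
  by exists I; split => // i; apply/eqP; apply: he.
exfalso; move: (hnone s) => /negbT /negP; apply.
case: hst => I [hI hI2 he]; apply/existsP; exists I.
rewrite /okI hI /=; apply/andP; split; first by apply/forall_inP.
by apply/forallP => i; rewrite he.
Qed.
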